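(* Let $n\geq2$, let $\lambda_1,\dots,\lambda_n\geq 0$ with $\sum_{i=1}^n\lambda_i=1$, let $\rho>0$ and let $z$ be a harmonic function in a neighborhood of the ball $B_\rho(0)\subset\mathbb{R}^n$ satisfying $z(0)=0$, $\nabla z(0)=0$, $D^2z(0)=0$. If the function $$w(x)=\sqrt{\tfrac12\sum_{i=1}^n\lambda_i x_i^2+z(x)}$$ is (well defined and) convex in $B_\rho(0)$, then $z\equiv 0$. *)

(* Defs.v *)
From HB Require Import structures.
From mathcomp Require Import all_boot all_order all_algebra.
From mathcomp Require Import all_classical all_reals all_analysis.
Set Implicit Arguments. Unset Strict Implicit. Unset Printing Implicit Defensive.
Import Order.TTheory GRing.Theory Num.Theory.
Import numFieldNormedType.Exports.
Local Open Scope classical_set_scope.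
Local Open Scope ring_scope.

(* R^n is modelled as row vectors 'rV[R]_n; coordinate x_i is x 0 i. *)

Definition ebasis (R : realType) (n : nat) (i : 'I_n) : 'rV[R]_n := delta_mx 0 i.

Definition partial (R : realType) (n : nat) (f : 'rV[R]_n -> R) (i : 'I_n)
  : 'rV[R]_n -> R := fun x => derive f x (ebasis R i).

Definition sqnorm (R : realType) (n : nat) (x : 'rV[R]_n) : R :=
  \sum_(i < n) x 0 i ^+ 2.

Definition eball0 (R : realType) (n : nat) (rho : R) : set 'rV[R]_n :=
  [set x | sqnorm x < rho ^+ 2].
Definition ecball0 (R : realType) (n : nat) (rho : R) : set 'rV[R]_n :=
  [set x | sqnorm x <= rho ^+ 2].

Definition laplacian (R : realType) (n : nat) (f : 'rV[R]_n -> R) (x : 'rV[R]_n) : R :=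
  \sum_(i < n) partial (partial f i) i x.

Definition harmonic_on (R : realType) (n : nat) (U : set 'rV[R]_n)
    (z : 'rV[R]_n -> R) : Prop :=
  open U /\
  forall x, U x ->
    [/\ differentiable z x,
        (forall i, differentiable (partial z i) x),
        (forall i j, {for x, continuous (partial (partial z i) j)}) &
        laplacian z x = 0].

Definition convex_on (R : realType) (n : nat) (A : set 'rV[R]_n)
    (f : 'rV[R]_n -> R) : Prop :=
  forall x y (t : R), A x -> A y -> 0 <= t -> t <= 1 ->
    f (t *: x + (1 - t) *: y) <= t * f x + (1 - t) * f y.

(* Main.v *)
Require Import Defs.
From HB Require Import structures.
From mathcomp Require Import all_boot all_order all_algebra.
From mathcomp Require Import all_classical all_reals all_analysis.
From mathcomp Require Import ring lra.
Import Order.TTheory GRing.Theory Num.Theory.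
Import numFieldNormedType.Exports.
Local Open Scope classical_set_scope.
Local Open Scope ring_scope.


Definition dotp {R : realType} {n : nat} (x y : 'rV[R]_n) : R := \sum_(i < n) x 0 i * y 0 i.

Lemma sqnorm_ge0 {R : realType} {n : nat} (x : 'rV[R]_n) : 0 <= sqnorm x.
Proof. by apply: sumr_ge0 => i _; rewrite sqr_ge0. Qed.

Lemma sqnormD {R : realType} {n : nat} (x y : 'rV[R]_n) : sqnorm (x + y) = sqnorm x + 2 * dotp x y + sqnorm y.
Proof.
rewrite /sqnorm /dotp mulr_sumr -!big_split /=; apply: eq_bigr => i _.
rewrite mxE; ring.
Qed.

Lemma sqnormZ {R : realType} {n : nat} (t : R) (x : 'rV[R]_n) : sqnorm (t *: x) = t ^+ 2 * sqnorm x.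
Proof.
rewrite /sqnorm mulr_sumr; apply: eq_bigr => i _; rewrite mxE; ring.
Qed.

Lemma dotpZr {R : realType} {n : nat} (t : R) (x y : 'rV[R]_n) : dotp x (t *: y) = t * dotp x y.
Proof. rewrite /dotp mulr_sumr; apply: eq_bigr => i _; rewrite mxE; ring. Qed.

Lemma sqnormN {R : realType} {n : nat} (x : 'rV[R]_n) : sqnorm (- x) = sqnorm x.
Proof. by rewrite -scaleN1r sqnormZ; ring. Qed.

Lemma sqnormB {R : realType} {n : nat} (x y : 'rV[R]_n) : sqnorm (x - y) = sqnorm (y - x).
Proof. by rewrite -sqnormN opprB. Qed.

Lemma sqnorm_eq0 {R : realType} {n : nat} (x : 'rV[R]_n) : sqnorm x = 0 -> x = 0.
Proof.
move=> /eqP; rewrite psumr_eq0 => [/allP H|i _]; last exact: sqr_ge0.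
apply/matrixP => i j; rewrite !mxE (ord1 i).
have := H j; rewrite mem_index_enum => /(_ isT) /=.
by rewrite sqrf_eq0 => /eqP.
Qed.

Lemma coord_le {R : realType} {n : nat} (x : 'rV[R]_n) i : x 0 i ^+ 2 <= sqnorm x.
Proof.
rewrite /sqnorm (bigD1 i) //= lerDl; apply: sumr_ge0 => j _; exact: sqr_ge0.
Qed.

Lemma CS {R : realType} {n : nat} (x y : 'rV[R]_n) : dotp x y ^+ 2 <= sqnorm x * sqnorm y.
Proof.
have H (mu : R) : 0 <= sqnorm x + 2 * mu * dotp x y + mu ^+ 2 * sqnorm y.
  have := sqnorm_ge0 (x + mu *: y).
  by rewrite sqnormD sqnormZ dotpZr mulrA.
have A0 := sqnorm_ge0 x; have B0 := sqnorm_ge0 y.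
have [B00|Bp] := eqVneq (sqnorm y) 0.
  have [D0|Dn] := eqVneq (dotp x y) 0; first by rewrite D0 B00; lra.
  have := H (- (sqnorm x + 1) / (2 * dotp x y)).
  rewrite B00 mulr0 addr0.
  have -> : sqnorm x + 2 * (- (sqnorm x + 1) / (2 * dotp x y)) * dotp x y = -1.
    by field; rewrite Dn.
  lra.
have Bpos : 0 < sqnorm y by rewrite lt_def Bp B0.
have := H (- dotp x y / sqnorm y).
have -> : sqnorm x + 2 * (- dotp x y / sqnorm y) * dotp x y +
   (- dotp x y / sqnorm y) ^+ 2 * sqnorm y = sqnorm x - dotp x y ^+ 2 / sqnorm y.
  by field; rewrite Bp.
rewrite subr_ge0 ler_pdivrMr //.
Qed.

Lemma minkowski {R : realType} {n : nat} (x y : 'rV[R]_n) : Num.sqrt (sqnorm (x + y)) <= Num.sqrt (sqnorm x) + Num.sqrt (sqnorm y).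
Proof.
have A0 := sqnorm_ge0 x; have B0 := sqnorm_ge0 y.
rewrite -(ler_pXn2r (n := 2)) ?nnegrE ?addr_ge0 ?sqrtr_ge0 //.
rewrite sqr_sqrtr ?sqnorm_ge0 // sqrrD !sqr_sqrtr // sqnormD.
rewrite lerD2r lerD2l.
have : dotp x y <= Num.sqrt (sqnorm x) * Num.sqrt (sqnorm y).
  rewrite -sqrtrM //.
  apply: (le_trans (ler_norm _)).
  rewrite -sqrtr_sqr; apply: ler_wsqrtr; exact: CS.
move=> h; rewrite mulr2n; lra.
Qed.

Lemma sqnorm_line {R : realType} {n : nat} (t : R) (i : 'I_n) (w : 'rV[R]_n) :
  sqnorm (t *: delta_mx 0 i + w) = sqnorm w + 2 * t * w 0 i + t ^+ 2.
Proof.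
rewrite /sqnorm (bigD1 i) //= [in RHS](bigD1 i) //=.
have -> : \sum_(j < n | j != i) (t *: delta_mx 0 i + w) 0 j ^+ 2 =
          \sum_(j < n | j != i) w 0 j ^+ 2.
  apply: eq_bigr => j ji; rewrite !mxE /= (negbTE ji) mulr0 add0r //.
rewrite !mxE !eqxx /= mulr1; ring.
Qed.

Lemma sqnorm0 {R : realType} {n : nat} : sqnorm (0 : 'rV[R]_n) = 0.
Proof. by rewrite /sqnorm big1 // => i _; rewrite mxE expr0n. Qed.

Lemma sq_lt_norm {R : realType} (a d : R) : 0 <= d -> a ^+ 2 < d ^+ 2 -> `|a| < d.
Proof. move=> d0 h; rewrite ltr_norml; apply/andP; split; nra. Qed.

Lemma sq_le_norm {R : realType} (a d : R) : 0 <= d -> a ^+ 2 <= d ^+ 2 -> `|a| <= d.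
Proof. move=> d0 h; rewrite ler_norml; apply/andP; split; nra. Qed.

Lemma sqnorm_diff {R : realType} {n : nat} (y x : 'rV[R]_n) : differentiable (fun x : 'rV[R]_n => sqnorm (x - y)) x.
Proof.
have -> : (fun x : 'rV[R]_n => sqnorm (x - y)) =
   \sum_(i < n) (fun x : 'rV[R]_n => (x 0 i - y 0 i) ^+ 2).
  apply/funext => u; rewrite /sqnorm fct_sumE; apply: eq_bigr => i _.
  by rewrite !mxE.
apply: differentiable_sum => i.
have -> : (fun x0 : 'rV[R]_n => (x0 0 i - y 0 i) ^+ 2) =
   (fun x0 : 'rV[R]_n => x0 0 i - y 0 i) ^+ 2 by apply/funext => u.
apply: differentiableX; apply: differentiableB => //.
exact: differentiable_coord.
Qed.

Lemma sqnorm_cont {R : realType} {n : nat} (y : 'rV[R]_n) : continuous (fun x : 'rV[R]_n => sqnorm (x - y)).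
Proof. by move=> x; apply: differentiable_continuous; apply: sqnorm_diff. Qed.
Lemma ballR0 {R : realType} (d t : R) : ball (0:R) d t <-> `|t| < d.
Proof. by rewrite /ball /= sub0r normrN. Qed.

Lemma sd_test {R : realType} (phi dphi : R -> R) (L : R) :
  (\forall t \near (0:R), phi 0 <= phi t) ->
  (\forall t \near (0:R), is_derive (t:R) (1:R) phi (dphi t)) ->
  is_derive (0:R) (1:R) dphi L -> 0 <= L.
Proof.
move=> Hmin Hder [Hd Hv].
rewrite leNgt; apply/negP => L0.
have Hq : (fun h : R => h^-1 *: ((dphi \o shift 0) (h *: 1) - dphi 0)) @ 0^' --> L.
  by rewrite -Hv; exact: Hd.
have K : \forall t \near 0^', (fun h : R => h^-1 *: ((dphi \o shift 0) (h *: 1) - dphi 0)) t < 0.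
  exact: (cvgr_lt _ Hq _ L0).
rewrite near_withinE in K.
have [d1 /= d10 H1] := (nbhs_ballP _ _).1 K.
have [d2 /= d20 H2] := (nbhs_ballP _ _).1 Hmin.
have [d3 /= d30 H3] := (nbhs_ballP _ _).1 Hder.
set eta := Num.min d1 (Num.min d2 d3) / 2.
have m0 : 0 < Num.min d1 (Num.min d2 d3) by rewrite !lt_min d10 d20 d30.
have eta0 : 0 < eta by rewrite divr_gt0.
have etalt : forall t : R, `|t| <= eta -> [/\ `|t| < d1, `|t| < d2 & `|t| < d3].
  move=> t Ht.
  have h : `|t| < Num.min d1 (Num.min d2 d3).
    apply: (le_lt_trans Ht); rewrite /eta ltr_pdivrMr // ltr_pMr // ?ltr1n //.
  by move: h; rewrite !lt_min => /and3P[-> -> ->].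
have Q (t : R) : `|t| <= eta -> t != 0 -> t^-1 * (dphi t - dphi 0) < 0.
  move=> /etalt [h1 _ _] tn0.
  have := H1 t; rewrite ballR0 => /(_ h1 tn0) /=.
  by rewrite addr0 [t%:A]mulr1 /=.
have Dr (t : R) : `|t| <= eta -> is_derive t 1 phi (dphi t).
  by move=> /etalt [_ _ h3]; apply: H3; rewrite ballR0.
have Mn (t : R) : `|t| <= eta -> phi 0 <= phi t.
  by move=> /etalt [_ h2 _]; apply: H2; rewrite ballR0.
have cont : {within `[- eta, eta], continuous phi}.
  apply: continuous_in_subspaceT => t; rewrite inE /= in_itv /= => /andP[a b].
  have : `|t| <= eta by rewrite ler_norml a b.
  move=> /Dr [dd _]; apply: differentiable_continuous.
  exact/derivable1_diffP.
have [c cI Ec] : exists2 c, c \in `]0, eta[ & phi eta - phi 0 = dphi c * (eta - 0).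
  apply: MVT => //.
    move=> t; rewrite in_itv /= => /andP[a b]; apply: Dr.
    by rewrite ger0_norm ?ltW.
  apply: (continuous_subspaceW _ cont) => t /=; rewrite !in_itv /= => /andP[a b].
  by rewrite b andbT (le_trans _ a) // oppr_le0 ltW.
have [c' cI' Ec'] : exists2 c, c \in `]- eta, 0[ & phi 0 - phi (- eta) = dphi c * (0 - - eta).
  apply: MVT; first by rewrite oppr_lt0.
    move=> t; rewrite in_itv /= => /andP[a b]; apply: Dr.
    by rewrite ltr0_norm // lerNl ltW.
  apply: (continuous_subspaceW _ cont) => t /=; rewrite !in_itv /= => /andP[a b].
  by rewrite a /= (le_trans b) // ltW.
move: cI cI'; rewrite !in_itv /= => /andP[c0 ce] /andP[ce' c'0].
have dc : dphi c < dphi 0.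
  have := Q c; rewrite ger0_norm ?ltW // ?(ltW ce) => /(_ isT (lt0r_neq0 c0)).
  by rewrite pmulr_rlt0 ?invr_gt0 // subr_lt0.
have dc' : dphi 0 < dphi c'.
  have := Q c'; rewrite ltr0_norm // => /(_ _ (ltr0_neq0 c'0)).
  rewrite lerNl ltW // => /(_ isT).
  by rewrite nmulr_rlt0 ?invr_lt0 // subr_gt0.
have m1 := Mn eta; have m2 := Mn (- eta).
rewrite normrN gtr0_norm // lexx in m1 m2.
have := m1 isT; have := m2 isT.
move: Ec Ec'; rewrite subr0 sub0r opprK => Ec Ec' A1 A2.
have : (dphi c - dphi c') * eta < 0 by rewrite pmulr_llt0 // subr_lt0 (lt_trans dc).
rewrite mulrBl -Ec -Ec'.
lra.
Qed.
Lemma line_is_derive {R : realType} {n : nat} (f : 'rV[R]_n -> R) (e x : 'rV[R]_n) (t d : R) :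
  is_derive (t *: e + x) e f d ->
  is_derive t 1 (fun s : R => f (s *: e + x)) d.
Proof.
move=> [H1 H2].
have E : (fun h : R => h^-1 *: (((fun s : R => f (s *: e + x)) \o shift t) (h *: 1) - f (t *: e + x)))
  = (fun h : R => h^-1 *: ((f \o shift (t *: e + x)) (h *: e) - f (t *: e + x))).
  apply/funext => h /=; congr (_ *: (f _ - _)).
  by rewrite /shift /= [h *: 1]mulr1 scalerDl addrA.
apply: DeriveDef.
  by rewrite /derivable E.
by rewrite /derive E.
Qed.

Arguments line_is_derive {R n f e x t d}.

Lemma line_cont {R : realType} {n : nat} (e x : 'rV[R]_n) : continuous (fun t : R => t *: e + x).
Proof.
move=> t.
have -> : (fun t : R => t *: e + x) = (fun t : R => t *: e) + (fun=> x) by [].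
apply: continuousD; first exact: scalel_continuous.
exact: cst_continuous.
Qed.

Lemma line_near {R : realType} {n : nat} (U : set 'rV[R]_n) (e x : 'rV[R]_n) : open U -> U x ->
  \forall t \near (0:R), U (t *: e + x).
Proof.
move=> oU Ux.
have : (fun t : R => t *: e + x) @ (0:R) --> (0 *: e + x) by apply: line_cont.
rewrite scale0r add0r => H; apply: H; apply: open_nbhs_nbhs; split => //.
Qed.


Lemma ball_rV (R : realType) (n : nat) (y x : 'rV[R]_n) d : 0 < d -> (forall j, `|y 0 j - x 0 j| < d) -> ball y d x.
Proof.
move=> d0 H; rewrite /ball /=; split => // i j; rewrite (ord1 i); exact: H.
Qed.

Lemma barrier (R : realType) (n : nat) (z : 'rV[R]_n -> R) (U : set 'rV[R]_n) (y p : 'rV[R]_n) (Rr : R) :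
  harmonic_on U z -> 0 < Rr ->
  (forall x, sqnorm (x - y) <= Rr ^+ 2 -> U x /\ 0 <= z x) ->
  0 < z y -> sqnorm (p - y) < Rr ^+ 2 -> 0 < z p.
Proof.
move=> [oU hzU] Rr0 HB zy0 py.
have Uy : U y by have := HB y; rewrite subrr sqnorm0 => /(_ (sqr_ge0 _)) [].
set c := z y / 2.
have c0 : 0 < c by rewrite divr_gt0.
have cy : c < z y by rewrite /c ltr_pdivrMr // ltr_pMr // ltr1n.
have [dz _ _ _] := hzU y Uy.
have zc : {for y, continuous z} := differentiable_continuous dz.
have K1 : \forall x \near y, c < z x.
  exact: (cvgr_gt _ zc _ cy).
have [d /= d0 Hd] := (nbhs_ballP _ _).1 K1.
set s := Num.min d Rr / 2.
have m0 : 0 < Num.min d Rr by rewrite lt_min d0 Rr0.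
have s0 : 0 < s by rewrite divr_gt0.
have sm : s < Num.min d Rr by rewrite /s ltr_pdivrMr // ltr_pMr // ltr1n.
have sd : s < d by move: sm; rewrite lt_min => /andP[].
have sR : s < Rr by move: sm; rewrite lt_min => /andP[].
have Hs : forall x, sqnorm (x - y) <= s ^+ 2 -> c < z x.
  move=> x hx; apply: Hd; apply: ball_rV => // j.
  rewrite -normrN opprB; apply: sq_lt_norm; first exact: ltW.
  have := coord_le (x - y) j; rewrite !mxE => h.
  apply: (le_lt_trans h); apply: (le_lt_trans hx).
  by rewrite ltr_pXn2r // ?nnegrE ltW.
have [Hps|Hps] := lerP (sqnorm (p - y)) (s ^+ 2).
  by apply: lt_trans (Hs p Hps).
have s2R : s ^+ 2 < Rr ^+ 2 by rewrite ltr_pXn2r // ?nnegrE ltW.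
set K0 := Rr ^+ 2 - s ^+ 2.
have K00 : 0 < K0 by rewrite subr_gt0.
set k := Num.truncn (n%:R * K0 / (2 * s ^+ 2)).
have km : n%:R * K0 < 2 * s ^+ 2 * k.+1%:R.
  have := truncnS_gt (n%:R * K0 / (2 * s ^+ 2)).
  rewrite ltr_pdivrMr ?mulr_gt0 ?exprn_gt0 // => h.
  by rewrite [X in _ < X]mulrC.
set m := k.+2.
set eps := c / K0 ^+ m.
have eps0 : 0 < eps by rewrite divr_gt0 // exprn_gt0.
set sqn := fun x : 'rV[R]_n => sqnorm (x - y).
set u := z - eps *: ((cst (Rr ^+ 2) - sqn) ^+ m).
have uE x : u x = z x - eps * (Rr ^+ 2 - sqnorm (x - y)) ^+ m.
  by rewrite /u !fctE.
set A := sqn @^-1` ([set r | s ^+ 2 <= r] `&` [set r | r <= Rr ^+ 2]).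
have cA : compact A.
  have cB := @rV_compact _ n (fun i => `[y 0 i - Rr, y 0 i + Rr]%classic)
     (fun i => @segment_compact _ _ _).
  apply: (subclosed_compact _ cB).
    rewrite /A; apply: preimage_closed.
      move=> x _; exact: sqnorm_cont.
    apply: closedI; [exact: closed_ge | exact: closed_le].
  move=> x [_ xR] i /=.
  have := coord_le (x - y) i; rewrite !mxE => h.
  have h2 : `|x 0 i - y 0 i| <= Rr by apply: sq_le_norm; [exact: ltW | exact: le_trans h xR].
  by rewrite in_itv /=; move: h2; rewrite ler_distl.
have A0 : A !=set0 by exists p; split; rewrite /sqn; [exact: ltW | exact: ltW].
have uc : {within A, continuous u}.
  apply: continuous_in_subspaceT => x; rewrite inE => -[_ xR].
  have [Ux _] := HB x xR.
  have [dzx _ _ _] := hzU x Ux.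
  apply: differentiable_continuous.
  apply: differentiableB; first exact: dzx.
  apply: differentiableZ.
  apply: differentiableX; apply: differentiableB => //.
  exact: sqnorm_diff.
have [xs xsA xsmin] := EVT_min_rV A0 cA uc.
suff us : 0 <= u xs.
  have := xsmin p; rewrite inE => /(_ (conj (ltW Hps) (ltW py))).
  move=> /(le_trans us); rewrite uE subr_ge0; apply: lt_le_trans.
  by rewrite mulr_gt0 // exprn_gt0 // subr_gt0.
rewrite leNgt; apply/negP => us.
move: xsA; rewrite inE => -[/= xs1 xs2].
set D := sqnorm (xs - y).
have Dgt : s ^+ 2 < D.
  rewrite ltNge; apply/negP => hD.
  have cz := Hs xs hD.
  have hX : (Rr ^+ 2 - D) ^+ m <= K0 ^+ m.
    by rewrite lerXn2r ?nnegrE ?subr_ge0 // ?lerD2l ?lerN2 // (le_trans xs1).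
  have : eps * (Rr ^+ 2 - D) ^+ m <= c.
    by rewrite -[c](@divfK _ (K0 ^+ m)) ?expf_neq0 ?lt0r_neq0 // ler_wpM2l // ltW.
  move: us; rewrite uE -/D; lra.
have Dlt : D < Rr ^+ 2.
  rewrite ltNge; apply/negP => hD.
  have DR : D = Rr ^+ 2 by apply/le_anti; rewrite xs2 hD.
  have [_ zx] := HB xs xs2.
  by move: us; rewrite uE -/D DR subrr expr0n /= mulr0 subr0 ltNge zx.
have [Uxs _] := HB xs xs2.
have [dzs dpzs _ lapz] := hzU xs Uxs.
set Kd := Rr ^+ 2 - D.
have Kd0 : 0 < Kd by rewrite subr_gt0.
set gam := eps * m%:R * 2 * Kd ^+ k.
have gam0 : 0 < gam.
  rewrite /gam; apply: mulr_gt0; last exact: exprn_gt0.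
  by rewrite mulr_gt0 // mulr_gt0 // ltr0n.

have Li : forall i : 'I_n, 0 <= partial (partial z i) i xs
     - gam * (2 * k.+1%:R) * ((xs - y) 0 i) ^+ 2 + gam * Kd.
  move=> i.
  set e := (delta_mx 0 i : 'rV[R]_n).
  set a := (xs - y) 0 i.
  set h := cst Kd - (2 * a) *: (@idfun R) - (@idfun R) ^+ 2.
  set dh := cst (- (2 * a)) - 2 *: (@idfun R).
  set phz := fun t : R => z (t *: e + xs).
  set dphz := fun t : R => partial z i (t *: e + xs).
  set phi := phz - eps *: h ^+ m.
  set dphi := dphz - eps *: (m%:R *: (h ^+ m.-1 * dh)).
  have hE t : h t = Rr ^+ 2 - sqnorm ((t *: e + xs) - y).
    rewrite /h !fctE /e -[_ + xs - y]addrA sqnorm_line /Kd /D /a /= /GRing.scale /=; ring.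
  have phiE t : phi t = u (t *: e + xs).
    by rewrite /phi uE !fctE hE.
  have gc : (fun t : R => sqn (t *: e + xs)) @ (0:R) --> D.
    have := continuous_comp (line_cont e xs 0) (sqnorm_cont y _).
    move=> hh; rewrite [X in _ --> X](_ : D = ((fun x0 => sqnorm (x0 - y)) \o (fun t => t *: e + xs)) 0); first exact: hh.
    by rewrite /= scale0r add0r.
  apply: (@sd_test _ phi dphi).
  - near=> t.
    rewrite !phiE scale0r add0r; apply: xsmin; rewrite inE; split => /=.
      by apply: ltW; near: t; exact: (cvgr_gt _ gc _ Dgt).
    by apply: ltW; near: t; exact: (cvgr_lt _ gc _ Dlt).
  - near=> t.
    have Ut : U (t *: e + xs) by near: t; exact: line_near.
    have [dzt _ _ _] := hzU _ Ut.
    have H1 : is_derive t 1 phz (dphz t).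
      apply: line_is_derive; rewrite /dphz /partial /ebasis.
      exact: (derivableP (diff_derivable (v := e) dzt)).
    apply: is_derive_eq.
    rewrite /dphi /dh !fctE /= ![_%:A]mulr1 /GRing.scale /=; ring.
  - have H2 : is_derive (0:R) (1:R) dphz (partial (partial z i) i xs).
      apply: line_is_derive; rewrite /partial /ebasis scale0r add0r.
      exact: (derivableP (diff_derivable (v := e) (dpzs i))).
    apply: is_derive_eq.
    rewrite /dh /h /gam /m !fctE /= ![_%:A]mulr1 /GRing.scale /=.
    rewrite !mulr0 expr0n /= !subr0 exprS; ring.
have : 0 <= \sum_(i < n) (partial (partial z i) i xs
     - gam * (2 * k.+1%:R) * ((xs - y) 0 i) ^+ 2 + gam * Kd).
  by apply: sumr_ge0 => i _; exact: Li.
rewrite big_split /= sumrB -mulr_sumr sumr_const card_ord.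
have -> : \sum_(i < n) partial (partial z i) i xs = 0 by exact: lapz.
have -> : \sum_(i < n) ((xs - y) 0 i) ^+ 2 = D by [].
rewrite sub0r addrC subr_ge0 -mulrnAr -mulrA ler_pM2l // -[Kd *+ n]mulr_natr.
move=> h.
have h1 : n%:R * Kd <= n%:R * K0.
  by rewrite ler_wpM2l // /Kd /K0 lerD2l lerN2 ltW.
have h2 : 2 * k.+1%:R * s ^+ 2 < 2 * k.+1%:R * D.
  by rewrite ltr_pM2l // mulr_gt0 // ltr0n.
move: km h h1 h2; rewrite [Kd * _]mulrC; lra.
Unshelve. all: by end_near. Qed.


Lemma dir_deriv_sum (R : realType) (n : nat) (f : 'rV[R]_n -> R) (a v : 'rV[R]_n) : differentiable f a ->
  derive f a v = \sum_(l < n) v 0 l * partial f l a.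
Proof.
move=> df; rewrite deriveE // {1}(row_sum_delta v) linear_sum.
apply: eq_bigr => l _; rewrite linearZ /= /partial /ebasis -deriveE //.
Qed.

Lemma z_nonneg_aux (R : realType) (n : nat) (z : 'rV[R]_n -> R) (U : set 'rV[R]_n) (x : 'rV[R]_n) :
  harmonic_on U z -> U 0 -> z 0 = 0 ->
  (forall i, partial z i 0 = 0) -> (forall i j, partial (partial z i) j 0 = 0) ->
  (forall t : R, 0 < t -> t <= 1 -> z (t *: x) <= t ^+ 2 * z x) -> 0 <= z x.
Proof.
move=> [oU hzU] U0 z0 z1 z2 H.
rewrite leNgt; apply/negP => zx.
set c := - z x.
have c0 : 0 < c by rewrite oppr_gt0.
have [dz0 dpz0 _ _] := hzU 0 U0.
set g := fun j (t : R) => partial z j (t *: x + 0).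
have Hg j : is_derive (0:R) (1:R) (g j) 0.
  have D0 : is_derive ((0:R) *: x + 0) x (partial z j) ('D_x (partial z j) 0).
    rewrite scale0r addr0; exact: (derivableP (diff_derivable (dpz0 j))).
  rewrite /g; apply: (is_derive_eq (line_is_derive D0)).
  rewrite dir_deriv_sum // big1 // => l _.
  by rewrite z2 mulr0.
set Psi := \sum_(j < n) (x 0 j) *: g j.
have HPsi : is_derive (0:R) (1:R) Psi 0.
  apply: is_derive_eq; rewrite big1 // => j _; exact: scaler0.
have Psi0 : Psi 0 = 0.
  rewrite /Psi fct_sumE big1 // => j _; rewrite !fctE /g scale0r add0r z1.
  exact: mulr0.
set phi := fun t : R => z (t *: x + 0).
have Hder : \forall t \near (0:R), is_derive t (1:R) phi (Psi t).
  near=> t.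
  have Ut : U (t *: x + 0) by near: t; exact: line_near.
  have [dzt _ _ _] := hzU _ Ut.
  apply: is_derive_eq.
    exact: (line_is_derive (derivableP (diff_derivable (v := x) dzt))).
  rewrite dir_deriv_sum // /Psi fct_sumE; apply: eq_bigr => j _.
  by rewrite !fctE.
have Hq : (fun h : R => h^-1 *: ((Psi \o shift 0) (h *: 1) - Psi 0)) @ 0^' --> (0:R).
  by have [d1 d2] := HPsi; rewrite -[X in _ --> X]d2; exact: d1.
have K : \forall t \near 0^', - c < (fun h : R => h^-1 *: ((Psi \o shift 0) (h *: 1) - Psi 0)) t.
  by apply: (cvgr_gt _ Hq); rewrite oppr_lt0.
rewrite near_withinE in K.
have [d1 /= d10 H1] := (nbhs_ballP _ _).1 K.
have [d2 /= d20 H2] := (nbhs_ballP _ _).1 Hder.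
set t := Num.min 1 (Num.min d1 d2) / 2.
have mm0 : 0 < Num.min 1 (Num.min d1 d2) by rewrite !lt_min ltr01 d10 d20.
have t0 : 0 < t by rewrite divr_gt0.
have tm : t < Num.min 1 (Num.min d1 d2) by rewrite /t ltr_pdivrMr // ltr_pMr // ltr1n.
have [t1 td1 td2] : [/\ t < 1, t < d1 & t < d2].
  by move: tm; rewrite !lt_min => /and3P[-> -> ->].
have Dr (r : R) : 0 <= r -> r <= t -> is_derive r 1 phi (Psi r).
  move=> r0 rt; apply: H2; rewrite ballR0 ger0_norm //; exact: le_lt_trans rt td2.
have [xi xiI Exi] : exists2 xi, xi \in `]0, t[ & phi t - phi 0 = Psi xi * (t - 0).
  apply: MVT => //.
    by move=> r; rewrite in_itv /= => /andP[a b]; apply: Dr; apply: ltW.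
  apply: continuous_in_subspaceT => r; rewrite inE /= in_itv /= => /andP[a b].
  have [dd _] := Dr r a b; apply: differentiable_continuous.
  exact/derivable1_diffP.
move: xiI; rewrite in_itv /= => /andP[xi0 xit].
have Q : - c < xi^-1 * Psi xi.
  have := H1 xi; rewrite ballR0 ger0_norm ?ltW // => /(_ (lt_trans xit td1) (lt0r_neq0 xi0)).
  by rewrite /= addr0 [xi%:A]mulr1 Psi0 subr0.
have Q2 : - c * xi < Psi xi by rewrite -ltr_pdivlMr // mulrC.
have phi0 : phi 0 = 0 by rewrite /phi scale0r add0r.
have Ht := H t t0 (ltW t1).
move: Exi; rewrite phi0 subr0 subr0 /phi addr0 => Exi.
have h1 : - c * xi * t < Psi xi * t by rewrite ltr_pM2r.
have h2 : - c * t * t < - c * xi * t.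
  have ct : 0 < c * t by rewrite mulr_gt0.
  nra.
move: Ht; rewrite Exi; rewrite /c in h1 h2; nra.
Unshelve. all: by end_near. Qed.


Lemma sq_le_iff (R : realType) (S a : R) : 0 <= S -> 0 <= a -> (S <= a ^+ 2) <-> (Num.sqrt S <= a).
Proof.
move=> S0 a0; split => h.
  by rewrite -(ger0_norm a0) -sqrtr_sqr ler_wsqrtr.
have := sqr_sqrtr S0; have := sqrtr_ge0 S; nra.
Qed.

Lemma step (R : realType) (n : nat) (z : 'rV[R]_n -> R) (U : set 'rV[R]_n) (rho r : R) :
  harmonic_on U z -> (forall x, sqnorm x <= rho ^+ 2 -> U x) ->
  (forall x, sqnorm x < rho ^+ 2 -> 0 <= z x) -> 0 <= r -> r < rho ->
  (forall x, sqnorm x <= r ^+ 2 -> z x = 0) ->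
  forall x, sqnorm x <= ((3 * r + rho) / 4) ^+ 2 -> z x = 0.
Proof.
move=> hz hU zpos r0 rrho Sr x1 hx1.
have rho0 : 0 < rho by apply: le_lt_trans rrho.
set N := Num.sqrt (sqnorm x1).
have N0 : 0 <= N := sqrtr_ge0 _.
have NE : N ^+ 2 = sqnorm x1 by rewrite sqr_sqrtr // sqnorm_ge0.
have NB : N <= (3 * r + rho) / 4.
  by apply/(@sq_le_iff R) => //; [exact: sqnorm_ge0 | lra].
have [Nr|Nr] := lerP N r.
  by apply: Sr; rewrite -NE; nra.
set Rr := (rho - r) / 2.
have Rr0 : 0 < Rr by rewrite divr_gt0 // subr_gt0.
have HB : forall x, sqnorm (x - x1) <= Rr ^+ 2 -> U x /\ 0 <= z x.
  move=> x hx.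
  have hx' : Num.sqrt (sqnorm (x - x1)) <= Rr.
    by apply/(@sq_le_iff R) => //; [exact: sqnorm_ge0 | exact: ltW].
  have := minkowski (x - x1) x1; rewrite subrK -/N => hm.
  have hxx : Num.sqrt (sqnorm x) < rho by move: hx'; rewrite /Rr; lra.
  have hs : sqnorm x < rho ^+ 2.
    have := sqr_sqrtr (sqnorm_ge0 x); have := sqrtr_ge0 (sqnorm x); nra.
  by split; [apply: hU; exact: ltW | exact: zpos].
have zx1 : 0 <= z x1.
  by apply: zpos; rewrite -NE; nra.
apply/eqP; rewrite eq_le zx1 andbT leNgt; apply/negP => zx1p.
set p := (r / N) *: x1.
have Np : 0 < N by lra.
have hp : sqnorm p = r ^+ 2.
  by rewrite /p sqnormZ -NE; field; rewrite gt_eqF.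
have hpx : sqnorm (p - x1) < Rr ^+ 2.
  have -> : p - x1 = (r / N - 1) *: x1 by rewrite /p scalerBl scale1r.
  rewrite sqnormZ -NE.
  have -> : (r / N - 1) ^+ 2 * N ^+ 2 = (N - r) ^+ 2 by field; rewrite gt_eqF.
  rewrite ltr_pXn2r ?nnegrE ?subr_ge0 ?ltW // /Rr; lra.
have := @barrier R n z U x1 p Rr hz Rr0 HB zx1p hpx.
by rewrite (Sr p) ?ltxx // ?hp.
Qed.

Lemma bern (R : realType) (k : nat) : (3/4 : R) ^+ k * (k%:R + 3) <= 3.
Proof.
elim: k => [|k IH]; first by rewrite expr0 mul1r add0r.
have Q0 : 0 <= (3/4 : R) ^+ k by apply: exprn_ge0; lra.
have k0 : 0 <= (k%:R : R) := ler0n _ _.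
have Qk : 0 <= (3/4 : R) ^+ k * k%:R by apply: mulr_ge0.
rewrite exprS mulrS; nra.
Qed.

Lemma choose_k (R : realType) (rho N : R) : 0 < rho -> 0 <= N -> N < rho ->
  exists k : nat, N <= rho - rho * (3/4) ^+ k.
Proof.
move=> hrho N0 Nr.
have eps0 : 0 < rho - N by rewrite subr_gt0.
have hk := truncnS_gt (3 * rho / (rho - N)).
move: (Num.truncn (3 * rho / (rho - N))) hk => k hk.
exists k.
have hk2 : 3 * rho < (rho - N) * (k%:R + 3).
  move: hk; rewrite ltr_pdivrMr // mulrS => hk.
  have : 0 <= (rho - N) * k%:R by apply: mulr_ge0; [exact: ltW | exact: ler0n].
  lra.
have hb := bern R k.
have Qk0 : 0 <= (3/4 : R) ^+ k by apply: exprn_ge0; lra.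
have k3 : 0 < (k%:R : R) + 3 by rewrite ltr_wpDl.
have hQ : rho * (3/4) ^+ k < rho - N.
  rewrite -(ltr_pM2r k3).
  have : rho * ((3/4) ^+ k * (k%:R + 3)) <= rho * 3 by rewrite ler_pM2l.
  rewrite mulrA; lra.
lra.
Qed.

Theorem lemma2p1 (R : realType) (n : nat) (hn : (2 <= n)%N)
  (lam : 'I_n -> R) (hlam0 : forall i, 0 <= lam i)
  (hlam1 : \sum_(i < n) lam i = 1)
  (rho : R) (hrho : 0 < rho)
  (z : 'rV[R]_n -> R) (U : set 'rV[R]_n)
  (hU : ecball0 rho `<=` U) (hz : harmonic_on U z)
  (hz0 : z 0 = 0)
  (hz1 : forall i, partial z i 0 = 0)
  (hz2 : forall i j, partial (partial z i) j 0 = 0)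
  (hdef : forall x, eball0 rho x ->
            0 <= 2^-1 * (\sum_(i < n) lam i * x 0 i ^+ 2) + z x)
  (hconv : convex_on (eball0 rho)
     (fun x => Num.sqrt (2^-1 * (\sum_(i < n) lam i * x 0 i ^+ 2) + z x))) :
  forall x, eball0 rho x -> z x = 0.
Proof.
have rho2 : 0 < rho ^+ 2 by exact: exprn_gt0.
have U0 : U 0 by apply: hU; rewrite /ecball0 /= sqnorm0 ltW.
have hUs : forall x, sqnorm x <= rho ^+ 2 -> U x by move=> x h; apply: hU.
have zpos : forall x, sqnorm x < rho ^+ 2 -> 0 <= z x.
  move=> x hx; apply: (@z_nonneg_aux R n z U x hz U0 hz0 hz1 hz2).
  move=> t t0 t1.
  set q := fun y : 'rV[R]_n => 2^-1 * (\sum_(i < n) lam i * y 0 i ^+ 2).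
  have qZ : q (t *: x) = t ^+ 2 * q x.
    rewrite /q !mulr_sumr; apply: eq_bigr => i _; rewrite mxE; ring.
  have q0 : q 0 = 0.
    by rewrite /q big1 ?mulr0 // => i _; rewrite mxE expr0n mulr0.
  have htx : eball0 rho (t *: x).
    rewrite /eball0 /= sqnormZ.
    have := sqnorm_ge0 x; have : t ^+ 2 <= 1 by rewrite expr_le1 // ltW.
    nra.
  have e0 : eball0 rho (0 : 'rV[R]_n) by rewrite /eball0 /= sqnorm0.
  have hc := hconv x 0 t hx e0 (ltW t0) t1.
  rewrite scaler0 addr0 /= -/(q (t *: x)) -/(q x) -/(q 0) q0 hz0 addr0 sqrtr0 mulr0 addr0 in hc.
  have ha := hdef _ htx; have hb := hdef _ hx.
  rewrite -/(q (t *: x)) in ha; rewrite -/(q x) in hb.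
  have sa := sqr_sqrtr ha; have sb := sqr_sqrtr hb.
  have sa0 := sqrtr_ge0 (q (t *: x) + z (t *: x)).
  have sb0 := sqrtr_ge0 (q x + z x).
  have : q (t *: x) + z (t *: x) <= t ^+ 2 * (q x + z x) by nra.
  rewrite qZ; lra.
have q34 : 0 < (3/4 : R) by lra.
have Sk : forall k : nat, forall y, sqnorm y <= (rho - rho * (3/4) ^+ k) ^+ 2 -> z y = 0.
  elim => [|k IH].
    move=> y; rewrite expr0 mulr1 subrr expr0n /= => hy.
    have -> : y = 0 by apply: sqnorm_eq0; apply/le_anti; rewrite hy sqnorm_ge0.
    exact: hz0.
  have Qk0 : 0 < (3/4 : R) ^+ k by apply: exprn_gt0.
  have Qk1 : (3/4 : R) ^+ k <= 1 by apply: exprn_ile1; lra.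
  have r0 : 0 <= rho - rho * (3/4) ^+ k.
    by rewrite subr_ge0 ger_pMr.
  have rr : rho - rho * (3/4) ^+ k < rho by rewrite ltrBlDr ltrDl mulr_gt0.
  move=> y hy; apply: (@step R n z U rho _ hz hUs zpos r0 rr IH).
  have E : rho - rho * (3/4) ^+ k.+1 = (3 * (rho - rho * (3/4) ^+ k) + rho) / 4 by rewrite exprS; field.
  by rewrite -E.
move=> x hx.
set N := Num.sqrt (sqnorm x).
have N0 : 0 <= N := sqrtr_ge0 _.
have Nr : N < rho.
  by rewrite /N -(ger0_norm (ltW hrho)) -sqrtr_sqr ltr_sqrt.
have [k hk] := @choose_k R rho N hrho N0 Nr.
have Qk1 : (3/4 : R) ^+ k <= 1 by apply: exprn_ile1; lra.
have r0 : 0 <= rho - rho * (3/4) ^+ k by rewrite subr_ge0 ger_pMr.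
apply: (Sk k); apply/(@sq_le_iff R) => //; exact: sqnorm_ge0.
Qed.
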